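(* Let $X$ be a topological space and $f\colon X\to\mathbb{R}^d$ an injective function. Suppose that the image $f(X)$ is not contained in an affine line in $\mathbb{R}^d$. Then $\alpha(f)=0$ if and only if $f$ is continuous.
   Context: $\mathrm{Conf}_2(X)=\{(x,y)\in X\times X: x\neq y\}$ with the subspace topology. $S^{d-1}$ carries the geodesic metric $d(u,v)=\arccos\langle u,v\rangle$. For a topological space $X$ and a metric space $Y$, $\delta(g)=\inf\{\delta\ge 0 : \text{for every } x\in X \text{ there is an open neighborhood } U_x \text{ of } x \text{ with } \operatorname{diam}(g(U_x))\le\delta\}$. For injective $f\colon X\to\mathbb{R}^d$, $\Phi_f\colon\mathrm{Conf}_2(X)\to S^{d-1}$, $\Phi_f(x,y)=\frac{f(x)-f(y)}{\|f(x)-f(y)\|}$, and $\alpha(f)=\delta(\Phi_f)$. *)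

(* Defs.v *)
From HB Require Import structures.
From mathcomp Require Import all_boot all_order all_algebra.
From mathcomp Require Import all_classical all_reals all_analysis.
Set Implicit Arguments. Unset Strict Implicit. Unset Printing Implicit Defensive.
Import Order.TTheory GRing.Theory Num.Theory numFieldNormedType.Exports.
Local Open Scope classical_set_scope.
Local Open Scope ring_scope.

Section Defs.
Context {R : realType} {d : nat}.

Definition dotp (u v : 'rV[R]_d) : R := \sum_(i < d) u ord0 i * v ord0 i.
Definition enorm (u : 'rV[R]_d) : R := Num.sqrt (dotp u u).

Definition geod (u v : 'rV[R]_d) : R := acos (dotp u v).

(* Conf_2(X) as a subset of X * X (it carries the subspace topology) *)
Definition Conf2 (X : Type) : set (X * X) := [set p | p.1 <> p.2].

(* Gauss map Phi_f (only meaningful on Conf_2 X, where f x <> f y when f injective) *)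
Definition Phi (X : Type) (f : X -> 'rV[R]_d) (p : X * X) : 'rV[R]_d :=
  (enorm (f p.1 - f p.2))^-1 *: (f p.1 - f p.2).

Definition gdiam (T : Type) (g : T -> 'rV[R]_d) (A : set T) : \bar R :=
  ereal_sup [set (geod (g a) (g b))%:E | a in A & b in A].

(* delta(g) for g : Conf_2(X) -> S^{d-1}; open neighborhoods in the subspace
   topology of Conf_2(X) are exactly the sets U `&` (@Conf2 X) with U open in X * X
   and containing the point. *)
Definition deltaConf (X : topologicalType) (g : X * X -> 'rV[R]_d) : \bar R :=
  ereal_inf [set (e%:E)%E | e in
    [set e : R | 0 <= e /\
      forall p, (@Conf2 X) p ->
        exists U : set (X * X), [/\ open U, U p &
          (gdiam g (U `&` (@Conf2 X)) <= e%:E)%E]]].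

Definition alpha (X : topologicalType) (f : X -> 'rV[R]_d) : \bar R :=
  deltaConf (Phi f).

Definition in_affine_line (X : Type) (f : X -> 'rV[R]_d) : Prop :=
  exists (a v : 'rV[R]_d), v <> 0 /\ forall x, exists t : R, f x = a + t *: v.

End Defs.

(* Main.v *)
Set Warnings "-notation-overridden,-ambiguous-paths,-notation-incompatible-prefix".
Require Import Defs.
From HB Require Import structures.
From mathcomp Require Import all_boot all_order all_algebra.
From mathcomp Require Import all_classical all_reals all_analysis.
From mathcomp Require Import ring lra.
Import Order.TTheory GRing.Theory Num.Theory numFieldNormedType.Exports.
Local Open Scope classical_set_scope.
Local Open Scope ring_scope.

Section Dot.
Context {R : realType} {d : nat}.
Implicit Types u v w : 'rV[R]_d.

Lemma dotpC u v : dotp u v = dotp v u.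
Proof. by apply: eq_bigr => i _; rewrite mulrC. Qed.

Lemma dotpDl u v w : dotp (u + v) w = dotp u w + dotp v w.
Proof. by rewrite /dotp -big_split; apply: eq_bigr => i _; rewrite mxE mulrDl. Qed.

Lemma dotpZl a u v : dotp (a *: u) v = a * dotp u v.
Proof. by rewrite /dotp mulr_sumr; apply: eq_bigr => i _; rewrite mxE mulrA. Qed.

Lemma dotpNl u v : dotp (- u) v = - dotp u v.
Proof. by rewrite -scaleN1r dotpZl mulN1r. Qed.

Lemma dotpBl u v w : dotp (u - v) w = dotp u w - dotp v w.
Proof. by rewrite dotpDl dotpNl. Qed.

Lemma dotpDr u v w : dotp w (u + v) = dotp w u + dotp w v.
Proof. by rewrite dotpC dotpDl !(dotpC w). Qed.
Lemma dotpZr a u v : dotp v (a *: u) = a * dotp v u.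
Proof. by rewrite dotpC dotpZl dotpC. Qed.
Lemma dotpNr u v : dotp v (- u) = - dotp v u.
Proof. by rewrite dotpC dotpNl dotpC. Qed.
Lemma dotpBr u v w : dotp w (u - v) = dotp w u - dotp w v.
Proof. by rewrite dotpC dotpBl !(dotpC w). Qed.

Lemma dotp_ge0 u : 0 <= dotp u u.
Proof. by apply: sumr_ge0 => i _; rewrite -expr2 sqr_ge0. Qed.

Lemma dotp_eq0 u : dotp u u = 0 -> u = 0.
Proof.
move=> /psumr_eq0P H; apply/rowP => i; rewrite mxE.
have /eqP := H (fun j _ => ltac:(by rewrite -expr2 sqr_ge0)) i isT.
by rewrite mulf_eq0 orbb => /eqP.
Qed.

Lemma entry_sq_le u i : u ord0 i ^+ 2 <= dotp u u.
Proof.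
rewrite /dotp (bigD1 i) //= -expr2 lerDl.
by apply: sumr_ge0 => j _; rewrite -expr2 sqr_ge0.
Qed.

Lemma dotp_Dsq a b u v :
  dotp (a *: u + b *: v) (a *: u + b *: v) =
  a ^+ 2 * dotp u u + 2 * a * b * dotp u v + b ^+ 2 * dotp v v.
Proof.
rewrite !dotpDl !dotpDr !dotpZl !dotpZr (dotpC v u); ring.
Qed.

Lemma dotp_par u v : dotp (u + v) (u + v) <= 2 * dotp u u + 2 * dotp v v.
Proof.
have := dotp_ge0 (u - v).
rewrite !dotpDl !dotpDr !dotpNl !dotpNr (dotpC v u) => H; lra.
Qed.

Lemma enorm_sq u : enorm u ^+ 2 = dotp u u.
Proof. by rewrite /enorm sqr_sqrtr // dotp_ge0. Qed.

Lemma enorm_gt0 u : u != 0 -> 0 < enorm u.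
Proof.
move=> u0; rewrite /enorm sqrtr_gt0 lt_def dotp_ge0 andbT.
by apply/eqP => /dotp_eq0 /eqP; apply/negP.
Qed.

Lemma unit_dotp u : u != 0 -> dotp ((enorm u)^-1 *: u) ((enorm u)^-1 *: u) = 1.
Proof.
move=> u0; rewrite dotpZl dotpZr -enorm_sq.
have := @enorm_gt0 u u0; set n := enorm u => n0.
by field; rewrite gt_eqF.
Qed.

Lemma unit_diff u v : dotp u u = 1 -> dotp v v = 1 ->
  dotp (u - v) (u - v) = 2 - 2 * dotp u v.
Proof.
move=> hu hv; rewrite !dotpBl !dotpBr hu hv (dotpC v u); ring.
Qed.

Lemma unit_dotp_bound u v : dotp u u = 1 -> dotp v v = 1 ->
  -1 <= dotp u v <= 1.
Proof.
move=> hu hv; have := dotp_ge0 (u - v); have := dotp_ge0 (u + v).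
rewrite unit_diff // !dotpDl !dotpDr hu hv (dotpC v u) => h1 h2.
apply/andP; split; lra.
Qed.


End Dot.
Section Acos.
Context {R : realType}.

Lemma acos_le_iff (x e : R) : -1 <= x <= 1 -> 0 <= e <= pi ->
  (acos x <= e) = (cos e <= x).
Proof.
move=> hx he; have [/andP[a0 api] ca] := acos_def hx.
rewrite -{2}ca [in RHS]leNgt ltr_cos ?leNgt // in_itv /=; first by rewrite a0 api.
Qed.
End Acos.

Section Cvg.
Context {R : realType} {d : nat}.
Lemma cvg_dotp {T} {F : set_system T} {FF : Filter F} {u v : T -> 'rV[R]_d} {u0 v0 : 'rV[R]_d} :
  u @ F --> u0 -> v @ F --> v0 ->
  (fun t => dotp (u t) (v t)) @ F --> dotp u0 v0.
Proof.
move=> hu hv; rewrite /dotp.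
have := (@cvg_big R 'I_d +%R 0 xpredT (@add_continuous R) T F (index_enum _)
  (fun i t => u t ord0 i * v t ord0 i) (fun i => u0 ord0 i * v0 ord0 i) FF).
move=> H; refine (H _) => i _.
have h1 : (fun x => u x ord0 i) @ F --> u0 ord0 i.
  exact: (cvg_comp _ _ hu (@coord_continuous R 1 d ord0 i u0)).
have h2 : (fun x => v x ord0 i) @ F --> v0 ord0 i.
  exact: (cvg_comp _ _ hv (@coord_continuous R 1 d ord0 i v0)).
exact: (cvgM h1 h2).
Qed.

End Cvg.

Section Dir2.
Context {R : realType} {d : nat}.

Lemma cvg_unit {T} {F : set_system T} {FF : Filter F} {w : T -> 'rV[R]_d} {w0 : 'rV[R]_d} :
  w0 != 0 -> w @ F --> w0 ->
  (fun t => (enorm (w t))^-1 *: w t) @ F --> (enorm w0)^-1 *: w0.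
Proof.
move=> w00 hw.
have hn : (fun t => enorm (w t)) @ F --> enorm w0.
  have h1 := @cvg_dotp _ _ _ _ FF _ _ _ _ hw hw.
  have h2 := @sqrt_continuous R (dotp w0 w0).
  have := cvg_comp _ _ h1 h2.
  exact.
have hv : (fun t => (enorm (w t))^-1) @ F --> (enorm w0)^-1 := cvgV (lt0r_neq0 (@enorm_gt0 _ _ _ w00)) hn.
apply: cvgZ; [exact: hv FF|exact: hw].
Qed.

Lemma Phi_near (X : topologicalType) (f : X -> 'rV[R]_d) (p : X * X) (eta : R) :
  continuous f -> f p.1 != f p.2 -> 0 < eta ->
  exists U : set (X * X), [/\ open U, U p &
    forall a b : X * X, U a -> U b -> 1 - eta < dotp (Phi f a) (Phi f b)].
Proof.
move=> fc hp eta0.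
have w0 : f p.1 - f p.2 != 0 by rewrite subr_eq0.
have hfst : (fun q : X * X => q.1) @ nbhs p --> p.1 by exact: cvg_fst.
have hsnd : (fun q : X * X => q.2) @ nbhs p --> p.2 by exact: cvg_snd.
have hw : forall (Y : Type) (G : set_system Y) (g : Y -> X * X), Filter G ->
   g @ G --> p -> (fun y => f (g y).1 - f (g y).2) @ G --> f p.1 - f p.2.
  move=> Y G g GF hg; apply: cvgB.
    exact: (cvg_comp _ _ (cvg_comp _ _ hg hfst) (fc p.1)).
  exact: (cvg_comp _ _ (cvg_comp _ _ hg hsnd) (fc p.2)).
pose G := fun q : (X * X) * (X * X) => dotp (Phi f q.1) (Phi f q.2).
have hG : G @ nbhs (p, p) --> dotp (Phi f p) (Phi f p).
  apply: cvg_dotp; apply: cvg_unit => //; apply: hw => //.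
    exact: cvg_fst.
  exact: cvg_snd.
rewrite /Phi unit_dotp // in hG.
move/cvgrPdist_lt : hG => /(_ eta eta0).
case=> -[A B] /= [nA nB] sub.
have : nbhs p (A `&` B) by apply: filterI.
rewrite nbhsE => -[V [oV Vp] VAB].
exists V; split => // a b Va Vb.
have := sub (a, b); rewrite /G /=.
move: (VAB a Va) (VAB b Vb) => [Aa _] [_ Bb].
move=> /(_ (conj Aa Bb)); rewrite ltr_norml => /andP[h1 h2].
lra.
Qed.

End Dir2.

Section Dir2b.
Context {R : realType} {d : nat}.

Lemma unitPhi (X : Type) (f : X -> 'rV[R]_d) (a : X * X) :
  f a.1 != f a.2 -> dotp (Phi f a) (Phi f a) = 1.
Proof. by move=> h; rewrite /Phi unit_dotp // subr_eq0. Qed.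

Lemma dir2 (X : topologicalType) (f : X -> 'rV[R]_d) :
  injective f -> continuous f -> alpha f = 0%E.
Proof.
move=> finj fc.
have Cf : forall a : X * X, Conf2 a -> f a.1 != f a.2.
  by move=> a Ca; apply/eqP => /finj.
apply/eqP; rewrite eq_le; apply/andP; split; last first.
  by apply/ereal_infP => _ [e [e0 _] <-]; rewrite lee_fin.
apply/lee_addgt0Pr => e e0; rewrite add0e.
apply: ge_ereal_inf; exists e%:E => //; exists e => //; split; first exact: ltW.
move=> p Cp.
pose e' := Num.min e pi.
have e'0 : 0 < e' by rewrite lt_min e0 pi_gt0.
have e'pi : e' <= pi by rewrite ge_min lexx orbT.
have cos_lt : cos e' < 1.
  rewrite -cos0 ltr_cos // in_itv /= ?lexx ?pi_ge0 ?(ltW e'0) //.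
have eta0 : 0 < 1 - cos e' by rewrite subr_gt0.
have [V [oV Vp HV]] := Phi_near _ _ _ _ fc (Cf p Cp) eta0.
exists V; split => //.
apply: ge_ereal_sup => _ [a [Va Ca] [b [Vb Cb] <-]].
rewrite lee_fin /geod.
apply: (@le_trans _ _ e'); last by rewrite ge_min lexx.
rewrite acos_le_iff ?unit_dotp_bound ?unitPhi ?Cf //; last by rewrite (ltW e'0).
have := HV a b Va Vb; lra.
Qed.
End Dir2b.
Lemma real_core (R : realType) (A B k s0 t0 Nu Nv δ m : R) : m = 1 - k^+2 -> 0 < m -> 0 <= Nu -> Nu <= δ -> 0 <= Nv -> Nv <= δ -> δ <= m/32 -> δ <= 1 ->
 A^+2 - 2*A*B*k + B^+2 <= 2*(t0+B)^+2*Nv + 2*(s0+A)^+2*Nu ->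
 2*A^+2 + 2*(s0+A)^+2*Nu <= δ*(s0^+2+t0^+2)*(192/m+4).
Proof.
move=> hm m0 Nu0 Nud Nv0 Nvd dm d1 H.
have h1 : m * (A^+2 + B^+2) <= 2 * (A^+2 - 2*A*B*k + B^+2).
  rewrite hm; have := sqr_ge0 (A - k * B); have := sqr_ge0 (B - k * A); nra.
have h2 : (t0+B)^+2 <= 2 * t0^+2 + 2 * B^+2 by have := sqr_ge0 (t0 - B); nra.
have h3 : (s0+A)^+2 <= 2 * s0^+2 + 2 * A^+2 by have := sqr_ge0 (s0 - A); nra.
have h4 : 2*(t0+B)^+2*Nv + 2*(s0+A)^+2*Nu <= 4 * δ * (s0^+2 + t0^+2 + A^+2 + B^+2).
  have e1 : (t0+B)^+2*Nv <= (2 * t0^+2 + 2 * B^+2) * δ.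
    apply: ler_pM => //; exact: sqr_ge0.
  have e2 : (s0+A)^+2*Nu <= (2 * s0^+2 + 2 * A^+2) * δ.
    apply: ler_pM => //; exact: sqr_ge0.
  lra.
set S := A^+2 + B^+2.
set K := s0^+2 + t0^+2.
have S0 : 0 <= S by rewrite /S addr_ge0 ?sqr_ge0.
have K0 : 0 <= K by rewrite /K addr_ge0 ?sqr_ge0.
have d0 : 0 <= δ by lra.
have h5 : m * S <= 16 * δ * K + 16 * δ * S.
  have := mulr_ge0 d0 K0; have := mulr_ge0 d0 S0; rewrite /S /K; lra.
have h6 : 16 * δ * S <= m * S / 2.
  have h : 32 * δ <= m.
    move: dm; rewrite ler_pdivlMr // => ?; lra.
  have h' := ler_wpM2r S0 h; lra.
have h7 : S <= 32 * δ * K / m.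
  rewrite ler_pdivlMr //; lra.
have hA : A^+2 <= S by rewrite /S lerDl sqr_ge0.
have e3 : (s0+A)^+2*Nu <= (2 * s0^+2 + 2 * A^+2) * δ.
  apply: ler_pM => //; exact: sqr_ge0.
have e4 : A^+2 * δ <= S * δ by apply: ler_wpM2r.
have e5 : S * δ <= S by rewrite -{2}(mulr1 S); apply: ler_wpM2l.
have e6 : s0^+2 <= K by rewrite /K lerDl sqr_ge0.
have e7 : s0^+2 * δ <= K * δ by apply: ler_wpM2r.
have e8 : δ * K * (192 / m + 4) = 192 * (δ * K / m) + 4 * δ * K by field; rewrite gt_eqF.
rewrite e8.
have e9 : S <= 32 * (δ * K / m) by rewrite mulrA mulrA; lra.
lra.
Qed.

Section Core.
Context {R : realType} {d : nat}.
Definition un (w : 'rV[R]_d) := (enorm w)^-1 *: w.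

Lemma un_scale (w : 'rV[R]_d) : w != 0 -> enorm w *: un w = w.
Proof.
move=> w0; rewrite /un scalerA mulfV ?scale1r //.
exact: lt0r_neq0 (@enorm_gt0 _ _ _ w0).
Qed.

Lemma un_unit (w : 'rV[R]_d) : w != 0 -> dotp (un w) (un w) = 1.
Proof. exact: unit_dotp. Qed.

Lemma dotpZZ (a : R) (w : 'rV[R]_d) : dotp (a *: w) (a *: w) = a ^+ 2 * dotp w w.
Proof. by rewrite dotpZl dotpZr mulrA expr2. Qed.

Lemma vec_core (c P Q p : 'rV[R]_d) (δ m : R) :
  c != P -> c != Q -> p != P -> p != Q ->
  m = 1 - (dotp (un (c - P)) (un (c - Q))) ^+ 2 -> 0 < m ->
  δ <= m / 32 -> δ <= 1 ->
  dotp (un (p - P) - un (c - P)) (un (p - P) - un (c - P)) <= δ ->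
  dotp (un (p - Q) - un (c - Q)) (un (p - Q) - un (c - Q)) <= δ ->
  dotp (p - c) (p - c) <=
    δ * (enorm (c - P) ^+ 2 + enorm (c - Q) ^+ 2) * (192 / m + 4).
Proof.
move=> cP cQ pP pQ hm m0 dm d1 hdu hdv.
have nz : forall x y : 'rV[R]_d, x != y -> x - y != 0.
  by move=> x y; rewrite subr_eq0.
have hu := un_scale _ (nz _ _ pP); have hu0 := un_scale _ (nz _ _ cP).
have hv := un_scale _ (nz _ _ pQ); have hv0 := un_scale _ (nz _ _ cQ).
have uu0 := un_unit _ (nz _ _ cP); have vv0 := un_unit _ (nz _ _ cQ).
set s := enorm (p - P) in hu *; set s0 := enorm (c - P) in hu0 *.
set t := enorm (p - Q) in hv *; set t0 := enorm (c - Q) in hv0 *.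
set u := un (p - P) in hu hdu *; set u0 := un (c - P) in hu0 hdu uu0 hm *.
set v := un (p - Q) in hv hdv *; set v0 := un (c - Q) in hv0 hdv vv0 hm *.
set k := dotp u0 v0 in hm.
set A := s - s0; set B := t - t0.
have E1 : p - c = A *: u0 + s *: (u - u0).
  apply/rowP => i.
  have := congr1 (fun M : 'rV[R]_d => M ord0 i) hu.
  have := congr1 (fun M : 'rV[R]_d => M ord0 i) hu0.
  rewrite /A !mxE => h1 h2; lra.
have E2 : A *: u0 + (- B) *: v0 = t *: (v - v0) + (- s) *: (u - u0).
  apply/rowP => i.
  have := congr1 (fun M : 'rV[R]_d => M ord0 i) hu.
  have := congr1 (fun M : 'rV[R]_d => M ord0 i) hu0.
  have := congr1 (fun M : 'rV[R]_d => M ord0 i) hv.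
  have := congr1 (fun M : 'rV[R]_d => M ord0 i) hv0.
  rewrite /A /B !mxE => h1 h2 h3 h4; lra.
have N1 : dotp (p - c) (p - c) <= 2 * A ^+ 2 + 2 * s ^+ 2 * dotp (u - u0) (u - u0).
  rewrite E1; apply: (le_trans (dotp_par _ _)).
  by rewrite (dotpZZ A u0) (dotpZZ s (u - u0)) uu0 mulr1 !mulrA.
have N2 : A ^+ 2 - 2 * A * B * k + B ^+ 2 <=
    2 * t ^+ 2 * dotp (v - v0) (v - v0) + 2 * s ^+ 2 * dotp (u - u0) (u - u0).
  have := dotp_par (t *: (v - v0)) ((- s) *: (u - u0)).
  rewrite -E2 dotp_Dsq (dotpZZ t (v - v0)) (dotpZZ (- s) (u - u0)) uu0 vv0 sqrrN -/k.
  move=> h; rewrite !mulrA in h *; lra.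
have hs : s = s0 + A by rewrite /A addrC subrK.
have ht : t = t0 + B by rewrite /B addrC subrK.
rewrite hs ht in N1 N2.
apply: (le_trans N1).
exact: (real_core _ _ _ _ _ _ _ _ _ _ hm m0 (dotp_ge0 _) hdu (dotp_ge0 _) hdv dm d1 N2).
Qed.
End Core.

Section Dir1.
Context {R : realType} {d : nat}.

Lemma alpha0_near (X : topologicalType) (f : X -> 'rV[R]_d) (eta : R) (p : X * X) :
  injective f -> alpha f = 0%E -> 0 < eta -> eta <= 1 -> Conf2 p ->
  exists U : set (X * X), [/\ open U, U p &
    forall q, U q -> Conf2 q -> 1 - eta <= dotp (Phi f p) (Phi f q)].
Proof.
move=> finj a0 eta0 eta1 Cp.
have Cf : forall a : X * X, Conf2 a -> f a.1 != f a.2.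
  by move=> a Ca; apply/eqP => /finj.
have hx : -1 <= 1 - eta <= 1 by apply/andP; split; lra.
pose e := acos (1 - eta).
have e0 : 0 < e by apply: acos_gt0; apply/andP; split; lra.
have epi : e <= pi by apply: acos_lepi.
have ce : cos e = 1 - eta by rewrite /e acosK // in_itv /=.
have : (alpha f < e%:E)%E by rewrite a0 lte_fin.
move=> /ereal_inf_lt [_ [e1 [e10 He1] <-]]; rewrite lte_fin => e1e.
have [U [oU Up HU]] := He1 p Cp.
exists U; split => // q Uq Cq.
have : ((geod (Phi f p) (Phi f q))%:E <= gdiam (Phi f) (U `&` @Conf2 X))%E.
  by apply: ereal_sup_ubound; exists p => //; exists q.
move=> /le_trans /(_ HU); rewrite lee_fin /geod => h.
rewrite -ce -acos_le_iff ?unit_dotp_bound ?unitPhi ?Cf //.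
  exact: (le_trans h (ltW e1e)).
by rewrite (ltW e0).
Qed.

Lemma near_pair (X : topologicalType) (U : set (X * X)) (x0 y : X) :
  open U -> U (x0, y) -> \forall x \near x0, U (x, y).
Proof.
move=> oU Ux.
have : nbhs (x0, y) U by apply: open_nbhs_nbhs.
case => -[A B] /= [nA nB] sub.
apply: filterS nA => x Ax; apply: sub; split => //=.
exact: nbhs_singleton nB.
Qed.

End Dir1.

Section Misc.
Context {R : realType} {d : nat}.

Lemma mxnorm_lt (v : 'rV[R]_d) (eps : R) : 0 < eps -> dotp v v < eps ^+ 2 -> `|v| < eps.
Proof.
move=> e0 hv; rewrite /Num.Def.normr /= mx_normrE.
apply: bigmax_lt => // -[i j] _ /=.
have := entry_sq_le v j; rewrite (ord1 i) => hj.
rewrite ltNge; apply/negP => h.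
have := real_normK (num_real (v ord0 j)).
have := normr_ge0 (v ord0 j).
nra.
Qed.

Lemma ge1_of (x : R) : (forall eta, 0 < eta -> eta <= 1 -> 1 - eta <= x) -> 1 <= x.
Proof.
move=> H; rewrite leNgt; apply/negP => hx.
have := H (Num.min 1 ((1 - x) / 2)).
rewrite lt_min ltr01 /= divr_gt0 ?subr_gt0 // ge_min lexx => /(_ isT isT).
have : Num.min 1 ((1 - x) / 2) <= (1 - x) / 2 by rewrite ge_min lexx orbT.
lra.
Qed.

Lemma NCprime (c P Q : 'rV[R]_d) :
  c != P -> (forall t : R, Q != c + t *: (c - P)) ->
  forall a b : R, a *: (c - Q) + b *: (c - P) = 0 -> a = 0 /\ b = 0.
Proof.
move=> cP hz a b h.
have cP0 : c - P != 0 by rewrite subr_eq0.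
have [a0|a0] := eqVneq a 0.
  split => //; move: h; rewrite a0 scale0r add0r => /eqP.
  by rewrite scaler_eq0 (negbTE cP0) orbF => /eqP.
exfalso; move/negP: (hz (b / a)); apply; apply/eqP; apply/rowP => i.
have := congr1 (fun M : 'rV[R]_d => M ord0 i) h; rewrite !mxE => hi.
have -> : Q ord0 i = c ord0 i - a^-1 * (a * (c ord0 i - Q ord0 i)) by field.
have -> : a * (c ord0 i - Q ord0 i) = - (b * (c ord0 i - P ord0 i)) by lra.
by field.
Qed.

Lemma dotp_perp (u v : 'rV[R]_d) : dotp u u = 1 -> dotp v v = 1 ->
  dotp (u - dotp u v *: v) (u - dotp u v *: v) = 1 - (dotp u v) ^+ 2.
Proof.
move=> hu hv; set k := dotp u v.
rewrite dotpBl !dotpBr (dotpZr k v u) (dotpZl k v u) dotpZZ hu hv (dotpC v u) -/k.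
ring.
Qed.

End Misc.

Theorem theorem3p7 (R : realType) (d : nat) (X : topologicalType)
    (f : X -> 'rV[R]_d) :
  injective f -> ~ in_affine_line f ->
  (alpha f = 0%E <-> continuous f).
Proof.
move=> finj nline; split; last exact: dir2.
move=> a0 x0.
have Cf : forall a : X * X, Conf2 a -> f a.1 != f a.2.
  by move=> a Ca; apply/eqP => /finj.
have [allx0|[y yx0]] : (forall y, y = x0) \/ exists y, y != x0.
  case: (pselect (exists y, y != x0)) => [h|h]; [by right|left => y].
  by apply/eqP; apply/negPn/negP => hy; apply: h; exists y.
  apply/cvgrPdist_lt => eps eps0; apply: nearW => t.
  by rewrite (allx0 t) subrr normr0.
set c := f x0; set P := f y.
have cP : c != P by apply/eqP => /finj hxy; move: yx0; rewrite hxy eqxx.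
have [z hz] : exists z, forall t : R, f z != c + t *: (c - P).
  apply/not_existsP => H; apply: nline; exists c, (c - P); split.
    by apply/eqP; rewrite subr_eq0.
  move=> x; have /existsNP [t /negP/negPn/eqP ht] := H x.
  by exists t.
set Q := f z in hz *.
have cQ : c != Q by apply/eqP => hcq; move: (hz 0); rewrite scale0r addr0 hcq eqxx.
have QP : Q != P.
  apply/eqP => hqp; move: (hz (-1)); rewrite hqp scaleN1r opprB addrC subrK eqxx //.
have zx0 : z != x0 by apply/eqP => hzx; move: cQ; rewrite /Q hzx eqxx.
have zy : z != y by apply/eqP => hzy; move: QP; rewrite /Q hzy eqxx.
have NC := NCprime _ _ _ cP hz.
have cP0 : c - P != 0 by rewrite subr_eq0.
have cQ0 : c - Q != 0 by rewrite subr_eq0.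
have s0pos := @enorm_gt0 _ _ _ cP0.
have t0pos := @enorm_gt0 _ _ _ cQ0.
have excl : forall w o : X, w != o -> x0 != o ->
    (forall A, nbhs x0 A -> A w) -> Phi f (x0, o) = Phi f (w, o).
  move=> w o wo x0o Hw.
  have C1 : Conf2 (x0, o) by move=> /= /eqP; rewrite (negbTE x0o).
  have C2 : Conf2 (w, o) by move=> /= /eqP; rewrite (negbTE wo).
  have H1 : 1 <= dotp (Phi f (x0, o)) (Phi f (w, o)).
    apply: ge1_of => eta eta0 eta1.
    have [U [oU Up HU]] := alpha0_near _ _ _ _ finj a0 eta0 eta1 C1.
    apply: HU => //; exact: (Hw _ (near_pair _ _ _ _ oU Up)).
  have u1 := unitPhi _ _ _ (Cf _ C1); have u2 := unitPhi _ _ _ (Cf _ C2).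
  have := unit_diff _ _ u1 u2; have := dotp_ge0 (Phi f (x0, o) - Phi f (w, o)).
  move=> h1 h2; have h3 : dotp (Phi f (x0, o) - Phi f (w, o)) (Phi f (x0, o) - Phi f (w, o)) = 0.
    lra.
  by move/dotp_eq0: h3 => /eqP; rewrite subr_eq0 => /eqP.
have r0 : 0 < enorm (P - Q) by apply: enorm_gt0; rewrite subr_eq0 eq_sym.
have r0' : 0 < enorm (Q - P) by apply: enorm_gt0; rewrite subr_eq0.
have ny : \forall x \near x0, x != y.
  have [//|hn] := pselect (\forall x \near x0, x != y).
  exfalso.
  have Hy : forall A, nbhs x0 A -> A y.
    move=> A nA; apply: contrapT => Ay; apply: hn; apply: filterS nA => x Ax.
    by apply/eqP => hxy; apply: Ay; rewrite -hxy.
  have E := excl y z (ltac:(by rewrite eq_sym)) (ltac:(by rewrite eq_sym)) Hy.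
  have [_ hb] := NC ((enorm (c - Q))^-1 - (enorm (P - Q))^-1) ((enorm (P - Q))^-1)
    ltac:(apply/rowP => i; have := congr1 (fun M : 'rV[R]_d => M ord0 i) E;
      rewrite /Phi /= !mxE => hi; lra).
  by move: r0; rewrite -invr_gt0 hb ltxx.
have nz : \forall x \near x0, x != z.
  have [//|hn] := pselect (\forall x \near x0, x != z).
  exfalso.
  have Hy : forall A, nbhs x0 A -> A z.
    move=> A nA; apply: contrapT => Ay; apply: hn; apply: filterS nA => x Ax.
    by apply/eqP => hxy; apply: Ay; rewrite -hxy.
  have E := excl z y zy (ltac:(by rewrite eq_sym)) Hy.
  have [ha _] := NC ((enorm (Q - P))^-1) ((enorm (c - P))^-1 - (enorm (Q - P))^-1)
    ltac:(apply/rowP => i; have := congr1 (fun M : 'rV[R]_d => M ord0 i) E;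
      rewrite /Phi /= !mxE => hi; lra).
  by move: r0'; rewrite -invr_gt0 ha ltxx.
have uu := un_unit _ cP0; have vv := un_unit _ cQ0.
set k := dotp (un (c - P)) (un (c - Q)).
set m := 1 - k ^+ 2.
have m0 : 0 < m.
  rewrite ltNge; apply/negP => hm.
  have h := dotp_perp _ _ uu vv; rewrite -/k -/m in h.
  have h0 : dotp (un (c - P) - k *: un (c - Q)) (un (c - P) - k *: un (c - Q)) = 0.
    by apply/eqP; rewrite eq_le dotp_ge0 andbT h.
  move/dotp_eq0: h0 => /eqP; rewrite subr_eq0 => /eqP E.
  have [_ hb] := NC (k * (enorm (c - Q))^-1) (- (enorm (c - P))^-1)
    ltac:(apply/rowP => i; have := congr1 (fun M : 'rV[R]_d => M ord0 i) E;
      rewrite /un !mxE => hi; lra).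
  move/eqP: hb; rewrite oppr_eq0 invr_eq0 => /eqP h0.
  by move: s0pos; rewrite h0 ltxx.
apply/cvgrPdist_lt => eps eps0.
set K := enorm (c - P) ^+ 2 + enorm (c - Q) ^+ 2.
set C := K * (192 / m + 4).
have K0 : 0 <= K by rewrite /K addr_ge0 ?sqr_ge0.
have C0 : 0 <= C by rewrite /C mulr_ge0 // addr_ge0 // divr_ge0 // ltW.
pose δ := Num.min (m / 32) (Num.min 1 (eps ^+ 2 / (C + 1))).
have δ0 : 0 < δ.
  by rewrite /δ !lt_min divr_gt0 // ltr01 divr_gt0 // ?exprn_gt0 // ltr_wpDl.
have δm : δ <= m / 32 by rewrite /δ ge_min lexx.
have δ1 : δ <= 1 by rewrite /δ !ge_min lexx orbT.
have δe : δ <= eps ^+ 2 / (C + 1) by rewrite /δ !ge_min lexx !orbT.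
have δC : δ * C < eps ^+ 2.
  move: δe; rewrite ler_pdivlMr ?ltr_wpDl // => h.
  have : δ * C < δ * (C + 1) by rewrite ltr_pM2l // ltrDl.
  lra.
have eta0 : 0 < δ / 2 by rewrite divr_gt0.
have eta1 : δ / 2 <= 1 by lra.
have C1 : Conf2 (x0, y) by move=> /= /eqP; rewrite eq_sym (negbTE yx0).
have C2 : Conf2 (x0, z) by move=> /= /eqP; rewrite eq_sym (negbTE zx0).
have [U1 [oU1 U1p HU1]] := alpha0_near _ _ _ _ finj a0 eta0 eta1 C1.
have [U2 [oU2 U2p HU2]] := alpha0_near _ _ _ _ finj a0 eta0 eta1 C2.
near=> x.
have xy : x != y by near: x; exact: ny.
have xz : x != z by near: x; exact: nz.
have U1x : U1 (x, y) by near: x; exact: (near_pair _ _ _ _ oU1 U1p).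
have U2x : U2 (x, z) by near: x; exact: (near_pair _ _ _ _ oU2 U2p).
have Cx1 : Conf2 (x, y) by move=> /= /eqP; rewrite (negbTE xy).
have Cx2 : Conf2 (x, z) by move=> /= /eqP; rewrite (negbTE xz).
have pP : f x != P by apply/eqP => /finj hx; move: xy; rewrite hx eqxx.
have pQ : f x != Q by apply/eqP => /finj hx; move: xz; rewrite hx eqxx.
have hd1 : dotp (un (f x - P) - un (c - P)) (un (f x - P) - un (c - P)) <= δ.
  have := HU1 _ U1x Cx1.
  have := unit_diff _ _ (unitPhi _ _ _ (Cf _ Cx1)) (unitPhi _ _ _ (Cf _ C1)).
  rewrite (dotpC (Phi f (x, y))) => h1 h2.
  rewrite /un; rewrite /Phi /= in h1 h2; lra.
have hd2 : dotp (un (f x - Q) - un (c - Q)) (un (f x - Q) - un (c - Q)) <= δ.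
  have := HU2 _ U2x Cx2.
  have := unit_diff _ _ (unitPhi _ _ _ (Cf _ Cx2)) (unitPhi _ _ _ (Cf _ C2)).
  rewrite (dotpC (Phi f (x, z))) => h1 h2.
  rewrite /un; rewrite /Phi /= in h1 h2; lra.
have := vec_core c P Q (f x) δ m cP cQ pP pQ erefl m0 δm δ1 hd1 hd2.
rewrite -/K -mulrA -/C => hN.
apply: mxnorm_lt => //.
have -> : c - f x = - (f x - c) by rewrite opprB.
rewrite dotpNl dotpNr opprK.
exact: (le_lt_trans hN δC).
Unshelve. all: by end_near.
Qed.
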